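(* Let $\mathcal{M}$ be an $n$-abelian category, let $X^0\xrightarrow{d_X^0}X^1\to\cdots\xrightarrow{d_X^{n-1}}X^n\xrightarrow{d_X^n}X^{n+1}$ be an $n$-exact sequence, let $Y^0\xrightarrow{d_Y^0}Y^1\to\cdots\xrightarrow{d_Y^{n-1}}Y^n$ be a complex with $d_Y^0$ a monomorphism, and let $(f^0,\dots,f^n)$ be a morphism of complexes from $X^0\to\cdots\to X^n$ to $Y^0\to\cdots\to Y^n$. The following are equivalent: (i) $(f^0,\dots,f^n)$ is an $n$-pushout diagram; (ii) its mapping cone is an $n$-exact sequence; (iii) it is both an $n$-pushout and an $n$-pullback diagram; (iv) there exists a morphism $d_Y^n:Y^n\to X^{n+1}$ with $d_Y^nf^n=d_X^n$ such that $Y^0\xrightarrow{d_Y^0}\cdots\xrightarrow{d_Y^{n-1}}Y^n\xrightarrow{d_Y^n}X^{n+1}$ is an $n$-exact sequence.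
   Context: A complex $X^0\xrightarrow{d^0}\cdots\xrightarrow{d^n}X^{n+1}$ is right $n$-exact if $0\to\mathcal{M}(X^{n+1},W)\to\cdots\to\mathcal{M}(X^0,W)$ is exact for all $W$, left $n$-exact if $0\to\mathcal{M}(W,X^0)\to\cdots\to\mathcal{M}(W,X^{n+1})$ is exact for all $W$, $n$-exact if both. For a morphism of complexes $f=(f^0,\dots,f^n)$ from $X^0\xrightarrow{d_X^0}\cdots\to X^n$ to $Y^0\xrightarrow{d_Y^0}\cdots\to Y^n$, its mapping cone is $X^0\to X^1\oplus Y^0\to\cdots\to X^n\oplus Y^{n-1}\to Y^n$ with differentials $\begin{pmatrix}-d_X^k&0\\ f^k&d_Y^{k-1}\end{pmatrix}$ ($d_X^n=0$, $d_Y^{-1}=0$ in this formula); $f$ is an $n$-pushout diagram if its mapping cone is right $n$-exact and an $n$-pullback diagram if its mapping cone is left $n$-exact. An $n$-abelian category is an idempotent complete additive category in which every morphism has an $n$-kernel and an $n$-cokernel, and in which every monomorphism (resp. epimorphism) together with any of its $n$-cokernels (resp. $n$-kernels) forms an $n$-exact sequence. *)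

(* Defs.v *)
From HB Require Import structures.
From mathcomp Require Import all_boot all_algebra.

Set Implicit Arguments.
Unset Strict Implicit.
Unset Printing Implicit Defensive.

Import GRing.Theory.
Local Open Scope ring_scope.

Record AddCat := AddCatMk {
  Obj :> Type;
  Mor : Obj -> Obj -> zmodType;
  mcomp : forall X Y Z : Obj, Mor Y Z -> Mor X Y -> Mor X Z;
  idm : forall X : Obj, Mor X X;
  compA : forall (X Y Z W : Obj) (h : Mor Z W) (g : Mor Y Z) (f : Mor X Y),
      mcomp h (mcomp g f) = mcomp (mcomp h g) f;
  comp1m : forall (X Y : Obj) (f : Mor X Y), mcomp (idm Y) f = f;
  compm1 : forall (X Y : Obj) (f : Mor X Y), mcomp f (idm X) = f;
  compDl : forall (X Y Z : Obj) (g1 g2 : Mor Y Z) (f : Mor X Y),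
      mcomp (g1 + g2) f = mcomp g1 f + mcomp g2 f;
  compDr : forall (X Y Z : Obj) (g : Mor Y Z) (f1 f2 : Mor X Y),
      mcomp g (f1 + f2) = mcomp g f1 + mcomp g f2;
  zobj : Obj;
  zobj_id : idm zobj = 0;
  bip : Obj -> Obj -> Obj;
  inj1 : forall X Y : Obj, Mor X (bip X Y);
  inj2 : forall X Y : Obj, Mor Y (bip X Y);
  pr1 : forall X Y : Obj, Mor (bip X Y) X;
  pr2 : forall X Y : Obj, Mor (bip X Y) Y;
  pr1inj1 : forall X Y : Obj, mcomp (pr1 X Y) (inj1 X Y) = idm X;
  pr2inj2 : forall X Y : Obj, mcomp (pr2 X Y) (inj2 X Y) = idm Y;
  pr1inj2 : forall X Y : Obj, mcomp (pr1 X Y) (inj2 X Y) = 0;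
  pr2inj1 : forall X Y : Obj, mcomp (pr2 X Y) (inj1 X Y) = 0;
  bip_id : forall X Y : Obj,
      mcomp (inj1 X Y) (pr1 X Y) + mcomp (inj2 X Y) (pr2 X Y) = idm (bip X Y)
}.

Arguments Mor {_} _ _.
Arguments mcomp {_ _ _ _} _ _.
Arguments idm {_} _.
Arguments zobj {_}.
Arguments bip {_} _ _.
Arguments inj1 {_ X Y}.
Arguments inj2 {_ X Y}.
Arguments pr1 {_ X Y}.
Arguments pr2 {_ X Y}.

Section NAbelian.
Variable C : AddCat.

Definition mono (X Y : C) (f : Mor X Y) : Prop :=
  forall (W : C) (g h : Mor W X), mcomp f g = mcomp f h -> g = h.

Definition epi (X Y : C) (f : Mor X Y) : Prop :=
  forall (W : C) (g h : Mor Y W), mcomp g f = mcomp h f -> g = h.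

Definition castHom (X X' Y Y' : C) (eX : X = X') (eY : Y = Y') (f : Mor X Y)
  : Mor X' Y' :=
  match eX in _ = X0, eY in _ = Y0 return Mor X0 Y0 with
  | erefl, erefl => f end.

(* Sequences.  Throughout, n = m.+1 (n >= 1).  A sequence               *)
(*   X^0 -d^0-> X^1 -> ... -> X^n -d^n-> X^{n+1}                        *)
(* is given by  X : nat -> C  (objects X 0, ..., X n),                  *)
(*   d : forall k, Mor (X k) (X k.+1)  (d^k = d k for k < n),           *)
(*   L : C  (= X^{n+1}) and  e : Mor (X n) L  (= d^n).                  *)

Unset Implicit Arguments.

(* right n-exact:  0 -> M(X^{n+1},W) -> M(X^n,W) -> ... -> M(X^0,W)
   is exact for all W (exactness at M(X^k,W), 1 <= k <= n+1). *)
Definition right_nexact (m : nat) (X : nat -> C)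
    (d : forall k, Mor (X k) (X k.+1)) (L : C) (e : Mor (X m.+1) L) : Prop :=
  [/\
      forall (W : C) (g : Mor L W), mcomp g e = 0 -> g = 0,
      forall (W : C) (g : Mor (X m.+1) W),
        mcomp g (d m) = 0 <-> exists h : Mor L W, g = mcomp h e &
      (* exactness at M(X^k,W), k = j+1, 1 <= k < n *)
      forall j, (j < m)%N -> forall (W : C) (g : Mor (X j.+1) W),
        mcomp g (d j) = 0 <-> exists h : Mor (X j.+2) W, g = mcomp h (d j.+1)].

(* left n-exact:  0 -> M(W,X^0) -> M(W,X^1) -> ... -> M(W,X^{n+1})
   is exact for all W (exactness at M(W,X^k), 0 <= k <= n). *)
Definition left_nexact (m : nat) (X : nat -> C)
    (d : forall k, Mor (X k) (X k.+1)) (L : C) (e : Mor (X m.+1) L) : Prop :=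
  [/\
      forall (W : C) (g : Mor W (X 0)), mcomp (d 0%N) g = 0 -> g = 0,
      (* exactness at M(W,X^k), k = j+1, 1 <= k < n *)
      forall j, (j < m)%N -> forall (W : C) (g : Mor W (X j.+1)),
        mcomp (d j.+1) g = 0 <-> exists h : Mor W (X j), g = mcomp (d j) h &
      forall (W : C) (g : Mor W (X m.+1)),
        mcomp e g = 0 <-> exists h : Mor W (X m), g = mcomp (d m) h].


Definition nexact m X d L e : Prop :=
  right_nexact m X d L e /\ left_nexact m X d L e.


Set Implicit Arguments.

Definition idempotent_complete : Prop :=
  forall (X : C) (p : Mor X X), mcomp p p = p ->
    exists (Y : C) (r : Mor X Y) (s : Mor Y X), mcomp r s = idm Y /\ mcomp s r = p.

Definition has_nkernel (m : nat) (A B : C) (f : Mor A B) : Prop :=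
  exists (X : nat -> C) (d : forall k, Mor (X k) (X k.+1)) (eA : A = X m.+1),
    left_nexact m X d B (castHom eA (erefl B) f).

Definition has_ncokernel (m : nat) (A B : C) (f : Mor A B) : Prop :=
  exists (X : nat -> C) (d : forall k, Mor (X k) (X k.+1)) (L : C)
         (e : Mor (X m.+1) L) (eA : A = X 0%N) (eB : B = X 1%N),
    d 0%N = castHom eA eB f /\ right_nexact m X d L e.

Definition nAbelian (m : nat) : Prop :=
  [/\ idempotent_complete,
      forall (A B : C) (f : Mor A B), has_nkernel m f,
      forall (A B : C) (f : Mor A B), has_ncokernel m f,
      forall X d L e, mono (d 0%N) -> right_nexact m X d L e -> nexact m X d L e &
      forall X d L e, epi e -> left_nexact m X d L e -> nexact m X d L e].

Definition col2 (A B1 B2 : C) (a : Mor A B1) (c : Mor A B2) : Mor A (bip B1 B2) :=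
  mcomp inj1 a + mcomp inj2 c.
Definition row2 (A1 A2 B : C) (c : Mor A1 B) (d : Mor A2 B) : Mor (bip A1 A2) B :=
  mcomp c pr1 + mcomp d pr2.
(* matrix [[a, b], [c, d]] : A1 (+) A2 -> B1 (+) B2 *)
Definition mx2 (A1 A2 B1 B2 : C) (a : Mor A1 B1) (b : Mor A2 B1)
    (c : Mor A1 B2) (d : Mor A2 B2) : Mor (bip A1 A2) (bip B1 B2) :=
  mcomp inj1 (mcomp a pr1 + mcomp b pr2) + mcomp inj2 (mcomp c pr1 + mcomp d pr2).

(* Mapping cone of f = (f^0,...,f^n) : (X^0 -> ... -> X^n) -> (Y^0 -> ... -> Y^n):
   X^0 -> X^1 (+) Y^0 -> ... -> X^n (+) Y^{n-1} -> Y^n,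
   with differentials [[-d_X^k, 0], [f^k, d_Y^{k-1}]]
   (d_X^n = 0, d_Y^{-1} = 0, so the first is the column (-d_X^0; f^0)
    and the last is the row (f^n  d_Y^{n-1})).                          *)
Section Cone.
Variables (m : nat) (X Y : nat -> C) (dX : forall k, Mor (X k) (X k.+1))
  (dY : forall k, Mor (Y k) (Y k.+1)) (f : forall k, Mor (X k) (Y k)).

(* objects C^0, ..., C^n ; C^{n+1} = Y^n is given separately *)
Definition cone_obj (k : nat) : C :=
  match k with 0 => X 0%N | j.+1 => bip (X j.+1) (Y j) end.

Definition cone_d (k : nat) : Mor (cone_obj k) (cone_obj k.+1) :=
  match k as k0 return Mor (cone_obj k0) (cone_obj k0.+1) with
  | 0 => col2 (- dX 0%N) (f 0%N)
  | j.+1 => mx2 (- dX j.+1) 0 (f j.+1) (dY j)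
  end.

Definition cone_last : Mor (cone_obj m.+1) (Y m.+1) := row2 (f m.+1) (dY m).

End Cone.

End NAbelian.

Arguments right_nexact {C} m X d L e.
Arguments left_nexact {C} m X d L e.
Arguments nexact {C} m X d L e.

(* Main.v *)
Require Import Defs.
From mathcomp Require Import all_boot all_algebra.

Set Implicit Arguments.
Unset Strict Implicit.
Unset Printing Implicit Defensive.
Import GRing.Theory.
Local Open Scope ring_scope.

Section Alg.
Variable C : AddCat.

Lemma comp0m (A B W : C) (g : Mor A B) : mcomp (0 : Mor B W) g = 0.
Proof.
have h := compDl (0 : Mor B W) 0 g; rewrite addr0 in h.
by apply: (addrI (mcomp (0 : Mor B W) g)); rewrite addr0 -h.
Qed.

Lemma compm0 (A B W : C) (g : Mor B W) : mcomp g (0 : Mor A B) = 0.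
Proof.
have h := compDr g (0 : Mor A B) 0; rewrite addr0 in h.
by apply: (addrI (mcomp g (0 : Mor A B))); rewrite addr0 -h.
Qed.

Lemma compNl (A B W : C) (g : Mor B W) (h : Mor A B) : mcomp (- g) h = - mcomp g h.
Proof. by apply/eqP; rewrite -addr_eq0 -compDl addNr comp0m. Qed.

Lemma compNr (A B W : C) (g : Mor B W) (h : Mor A B) : mcomp g (- h) = - mcomp g h.
Proof. by apply/eqP; rewrite -addr_eq0 -compDr addNr compm0. Qed.

Lemma addm0 (A B : C) (x : Mor A B) : x + 0 = x. Proof. exact: addr0. Qed.
Lemma add0m (A B : C) (x : Mor A B) : 0 + x = x. Proof. exact: add0r. Qed.
Lemma addNm (A B : C) (x : Mor A B) : - x + x = 0. Proof. exact: addNr. Qed.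
Lemma oppm0 (A B : C) : - (0 : Mor A B) = 0. Proof. exact: oppr0. Qed.
Lemma oppmK (A B : C) (x : Mor A B) : - - x = x. Proof. exact: opprK. Qed.

Lemma pr1_col (A B1 B2 : C) (a : Mor A B1) (c : Mor A B2) : mcomp pr1 (col2 a c) = a.
Proof. by rewrite /col2 compDr !Defs.compA pr1inj1 pr1inj2 comp1m comp0m addr0. Qed.

Lemma pr2_col (A B1 B2 : C) (a : Mor A B1) (c : Mor A B2) : mcomp pr2 (col2 a c) = c.
Proof. by rewrite /col2 compDr !Defs.compA pr2inj1 pr2inj2 comp1m comp0m add0r. Qed.

Lemma row_inj1 (A1 A2 B : C) (c : Mor A1 B) (d : Mor A2 B) : mcomp (row2 c d) inj1 = c.
Proof. by rewrite /row2 compDl -!Defs.compA pr1inj1 pr2inj1 compm1 compm0 addr0. Qed.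

Lemma row_inj2 (A1 A2 B : C) (c : Mor A1 B) (d : Mor A2 B) : mcomp (row2 c d) inj2 = d.
Proof. by rewrite /row2 compDl -!Defs.compA pr1inj2 pr2inj2 compm1 compm0 add0r. Qed.

Lemma colE (W B1 B2 : C) (g : Mor W (bip B1 B2)) : col2 (mcomp pr1 g) (mcomp pr2 g) = g.
Proof. by rewrite /col2 !Defs.compA -compDl bip_id comp1m. Qed.

Lemma rowE (A1 A2 W : C) (g : Mor (bip A1 A2) W) : row2 (mcomp g inj1) (mcomp g inj2) = g.
Proof. by rewrite /row2 -!Defs.compA -compDr bip_id compm1. Qed.

Lemma col_comp (V A B1 B2 : C) (a : Mor A B1) (c : Mor A B2) (h : Mor V A) :
  mcomp (col2 a c) h = col2 (mcomp a h) (mcomp c h).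
Proof. by rewrite /col2 compDl -!Defs.compA. Qed.

Lemma comp_row (A1 A2 B W : C) (h : Mor B W) (c : Mor A1 B) (d : Mor A2 B) :
  mcomp h (row2 c d) = row2 (mcomp h c) (mcomp h d).
Proof. by rewrite /row2 compDr !Defs.compA. Qed.

Lemma row_col (V A1 A2 B : C) (c : Mor A1 B) (d : Mor A2 B) (a : Mor V A1) (b : Mor V A2) :
  mcomp (row2 c d) (col2 a b) = mcomp c a + mcomp d b.
Proof. by rewrite /row2 compDl -!Defs.compA pr1_col pr2_col. Qed.

Lemma comp_col (V A1 A2 W : C) (g : Mor (bip A1 A2) W) (a : Mor V A1) (b : Mor V A2) :
  mcomp g (col2 a b) = mcomp (mcomp g inj1) a + mcomp (mcomp g inj2) b.
Proof. by rewrite -{1}(rowE g) row_col. Qed.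

Lemma col2_0 (V A1 A2 : C) : col2 (0 : Mor V A1) (0 : Mor V A2) = 0.
Proof. by rewrite /col2 !compm0 addr0. Qed.

Lemma row2_0 (A1 A2 W : C) : row2 (0 : Mor A1 W) (0 : Mor A2 W) = 0.
Proof. by rewrite /row2 !comp0m addr0. Qed.

Lemma col2_eq (V A1 A2 : C) (a a' : Mor V A1) (b b' : Mor V A2) :
  col2 a b = col2 a' b' -> a = a' /\ b = b'.
Proof. by move=> h; split; [rewrite -(pr1_col a b) h pr1_col | rewrite -(pr2_col a b) h pr2_col]. Qed.

Lemma row2_eq (A1 A2 W : C) (a a' : Mor A1 W) (b b' : Mor A2 W) :
  row2 a b = row2 a' b' -> a = a' /\ b = b'.
Proof. by move=> h; split; [rewrite -(row_inj1 a b) h row_inj1 | rewrite -(row_inj2 a b) h row_inj2]. Qed.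

Lemma col2_eq0 (V A1 A2 : C) (a : Mor V A1) (b : Mor V A2) :
  col2 a b = 0 -> a = 0 /\ b = 0.
Proof. by rewrite -col2_0 => /col2_eq. Qed.

Lemma row2_eq0 (A1 A2 W : C) (a : Mor A1 W) (b : Mor A2 W) :
  row2 a b = 0 -> a = 0 /\ b = 0.
Proof. by rewrite -row2_0 => /row2_eq. Qed.

Lemma row2D (A1 A2 W : C) (a a' : Mor A1 W) (b b' : Mor A2 W) :
  row2 a b + row2 a' b' = row2 (a + a') (b + b').
Proof. by rewrite /row2 !compDl addrACA. Qed.

Lemma mono_eq0 (A B : C) (g : Mor A B) : mono g ->
  forall (W : C) (h : Mor W A), mcomp g h = 0 -> h = 0.
Proof. by move=> hm W h e; apply: hm; rewrite e compm0. Qed.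

Lemma mono_of_eq0 (A B : C) (g : Mor A B) :
  (forall (W : C) (h : Mor W A), mcomp g h = 0 -> h = 0) -> mono g.
Proof.
move=> H W h1 h2 e; apply/eqP; rewrite -subr_eq0; apply/eqP; apply: H.
by rewrite compDr compNr e subrr.
Qed.

Lemma epi_of_eq0 (A B : C) (g : Mor A B) :
  (forall (W : C) (h : Mor B W), mcomp h g = 0 -> h = 0) -> epi g.
Proof.
move=> H W h1 h2 e; apply/eqP; rewrite -subr_eq0; apply/eqP; apply: H.
by rewrite compDl compNl e subrr.
Qed.

Lemma lex_cpx m (Z : nat -> C) (d : forall k, Mor (Z k) (Z k.+1)) (L : C) (e : Mor (Z m.+1) L) :
  left_nexact m Z d L e ->
  (forall k, (k < m)%N -> mcomp (d k.+1) (d k) = 0) /\ mcomp e (d m) = 0.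
Proof.
case=> _ h2 h3; split.
- by move=> k hk; apply: (proj2 (h2 k hk _ (d k))); exists (idm _); rewrite compm1.
- by apply: (proj2 (h3 _ (d m))); exists (idm _); rewrite compm1.
Qed.

Lemma lex_at m (Z : nat -> C) (d : forall k, Mor (Z k) (Z k.+1)) :
  left_nexact m Z d (Z m.+2) (d m.+1) ->
  forall k, (k <= m)%N -> forall (W : C) (g : Mor W (Z k.+1)),
    mcomp (d k.+1) g = 0 -> exists h : Mor W (Z k), g = mcomp (d k) h.
Proof.
case=> _ h2 h3 k; rewrite leq_eqVlt => /orP [/eqP -> | hk] W g hg.
- exact: (proj1 (h3 W g)).
- exact: (proj1 (h2 k hk W g)).
Qed.

Lemma rex_at m (Z : nat -> C) (d : forall k, Mor (Z k) (Z k.+1)) :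
  right_nexact m Z d (Z m.+2) (d m.+1) ->
  forall k, (k <= m)%N -> forall (W : C) (g : Mor (Z k.+1) W),
    mcomp g (d k) = 0 -> exists h : Mor (Z k.+2) W, g = mcomp h (d k.+1).
Proof.
case=> _ h2 h3 k; rewrite leq_eqVlt => /orP [/eqP -> | hk] W g hg.
- exact: (proj1 (h2 W g)).
- exact: (proj1 (h3 k hk W g)).
Qed.

End Alg.

Section Cone.
Variables (C : AddCat) (X Y : nat -> C) (dX : forall k, Mor (X k) (X k.+1))
  (dY : forall k, Mor (Y k) (Y k.+1)) (f : forall k, Mor (X k) (Y k)).

Local Notation cd := (cone_d dX dY f).

Lemma mx2E (A1 A2 B1 B2 : C) (a : Mor A1 B1) (b : Mor A2 B1) (c : Mor A1 B2) (d : Mor A2 B2) :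
  mx2 a b c d = col2 (row2 a b) (row2 c d).
Proof. by []. Qed.

Lemma cd0E : cd 0 = col2 (- dX 0) (f 0).
Proof. by []. Qed.

Lemma cdSE j : cd j.+1 = col2 (row2 (- dX j.+1) 0) (row2 (f j.+1) (dY j)).
Proof. by []. Qed.

Lemma clE m : cone_last m dY f = row2 (f m.+1) (dY m).
Proof. by []. Qed.

Lemma cd_cpx0 : mcomp (dX 1) (dX 0) = 0 -> mcomp (f 1) (dX 0) = mcomp (dY 0) (f 0) ->
  mcomp (cd 1) (cd 0) = 0.
Proof.
move=> hx hf /=; rewrite mx2E col_comp !row_col compNl compNr oppmK comp0m addm0.
by rewrite compNr hx hf addNm col2_0.
Qed.

Lemma cd_cpxS i : mcomp (dX i.+2) (dX i.+1) = 0 ->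
  mcomp (f i.+2) (dX i.+1) = mcomp (dY i.+1) (f i.+1) ->
  mcomp (dY i.+1) (dY i) = 0 ->
  mcomp (cd i.+2) (cd i.+1) = 0.
Proof.
move=> hx hf hy /=; rewrite !mx2E col_comp !row_col !comp_row !comp0m !compm0.
by rewrite row2_0 addm0 compNl compNr oppmK hx compNr row2D hf hy addNm add0m !row2_0 col2_0.
Qed.

Lemma cl_cpx m : (forall k, (k <= m)%N -> mcomp (f k.+1) (dX k) = mcomp (dY k) (f k)) ->
  (forall k, (k < m)%N -> mcomp (dY k.+1) (dY k) = 0) ->
  mcomp (cone_last m dY f) (cd m) = 0.
Proof.
case: m => [|i] hf hy; rewrite clE.
- by rewrite cd0E row_col compNr hf // addNm.
- rewrite cdSE row_col !comp_row compm0 compNr row2D hf // hy // addNm addm0.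
  exact: row2_0.
Qed.

Lemma cone_cpx m : (forall k, (k <= m)%N -> mcomp (dX k.+1) (dX k) = 0) ->
  (forall k, (k <= m)%N -> mcomp (f k.+1) (dX k) = mcomp (dY k) (f k)) ->
  (forall k, (k < m)%N -> mcomp (dY k.+1) (dY k) = 0) ->
  forall j, (j < m)%N -> mcomp (cd j.+1) (cd j) = 0.
Proof.
move=> hx hf hy [|i] hi.
- by apply: cd_cpx0; [apply: hx | apply: hf]; apply: ltnW.
- apply: cd_cpxS; [apply: hx | apply: hf | apply: hy] => //; exact: ltnW.
Qed.

Lemma cone_mono : mono (dX 0) -> mono (cd 0).
Proof.
move=> hm; apply: mono_of_eq0 => W g; rewrite cd0E col_comp => /col2_eq0 [h1 _].
by apply: (mono_eq0 hm); apply/eqP; rewrite -oppr_eq0 -compNl h1.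
Qed.

Lemma core_left m (hXL : left_nexact m X dX (X m.+2) (dX m.+1)) (hY0 : mono (dY 0))
  (hYL : forall i, (i < m)%N -> forall (W : C) (g : Mor W (Y i.+1)),
     mcomp (dY i.+1) g = 0 -> exists h : Mor W (Y i), g = mcomp (dY i) h)
  (hf : forall k, (k <= m)%N -> mcomp (f k.+1) (dX k) = mcomp (dY k) (f k))
  j (hj : (j <= m)%N) (W : C) (g1 : Mor W (X j.+1)) (g2 : Mor W (Y j)) :
  mcomp (dX j.+1) g1 = 0 -> mcomp (f j.+1) g1 + mcomp (dY j) g2 = 0 ->
  exists h : Mor W (cone_obj X Y j), col2 g1 g2 = mcomp (cd j) h.
Proof.
move=> h1 h2; have [u hu] := lex_at hXL hj h1.
have e : mcomp (dY j) (mcomp (f j) u + g2) = 0.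
  by rewrite compDr Defs.compA -(hf j hj) -Defs.compA -hu.
move: hj g1 g2 h1 h2 u hu e; case: j => [|i] hj g1 g2 h1 h2 u hu e.
- have hz := mono_eq0 hY0 e.
  exists (- u); rewrite cd0E col_comp compNl compNr oppmK compNr -hu.
  by move/eqP: hz; rewrite addrC addr_eq0 => /eqP ->.
- have [v hv] := hYL i hj W _ e.
  exists (col2 (- u) v); rewrite cdSE col_comp !row_col comp0m addm0 compNl compNr oppmK -hu.
  by rewrite compNr -hv addrA addNm add0m.
Qed.

Lemma cone_left m (hXL : left_nexact m X dX (X m.+2) (dX m.+1)) (hY0 : mono (dY 0))
  (dYn : Mor (Y m.+1) (X m.+2)) (hYL : left_nexact m Y dY (X m.+2) dYn)
  (hdf : mcomp dYn (f m.+1) = dX m.+1)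
  (hf : forall k, (k <= m)%N -> mcomp (f k.+1) (dX k) = mcomp (dY k) (f k)) :
  left_nexact m (cone_obj X Y) cd (Y m.+1) (cone_last m dY f).
Proof.
have [hXc1 hXc2] := lex_cpx hXL.
have [hYc1 hYc2] := lex_cpx hYL.
have hXc : forall k, (k <= m)%N -> mcomp (dX k.+1) (dX k) = 0.
  by move=> k; rewrite leq_eqVlt => /orP [/eqP -> | /hXc1].
have hYL' : forall i, (i < m)%N -> forall (W : C) (g : Mor W (Y i.+1)),
     mcomp (dY i.+1) g = 0 -> exists h : Mor W (Y i), g = mcomp (dY i) h.
  by case: hYL => _ h2 _ i hi W g hg; exact: (proj1 (h2 i hi W g)).
split.
- move=> W g; rewrite cd0E col_comp => /col2_eq0 [h1 _].
  case: hXL => hX1 _ _; apply: hX1; apply/eqP; rewrite -oppr_eq0 -compNl h1 //.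
- move=> j hj W g; move: g => /= g; split.
  + move=> hg; rewrite -(colE g); apply: (core_left hXL hY0 hYL' hf (ltnW hj)).
    * move: hg => /=; rewrite mx2E -(colE g) col_comp !row_col comp0m addm0.
      by move=> /col2_eq0 [h1 _]; rewrite pr1_col; apply/eqP; rewrite -oppr_eq0 -compNl h1.
    * move: hg => /=; rewrite mx2E -(colE g) col_comp !row_col.
      by move=> /col2_eq0 [_]; rewrite pr1_col pr2_col.
  + by case=> h ->; rewrite Defs.compA (cone_cpx hXc hf hYc1) // comp0m.
- move=> W g; move: g => /= g; split.
  + move=> hg; rewrite -(colE g); apply: (core_left hXL hY0 hYL' hf (leqnn m)); last first.
      by move: hg; rewrite clE -(colE g) row_col pr1_col pr2_col.
    move: hg; rewrite clE -(colE g) row_col => /eqP; rewrite addr_eq0 => /eqP e1.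
    by rewrite pr1_col -hdf -Defs.compA e1 compNr Defs.compA hYc2 comp0m oppm0.
  + by case=> h ->; rewrite Defs.compA cl_cpx // comp0m.
Qed.

Lemma cl_epi m (dYn : Mor (Y m.+1) (X m.+2))
  (hXR1 : forall (W : C) (g : Mor (X m.+2) W), mcomp g (dX m.+1) = 0 -> g = 0)
  (hYR2 : forall (W : C) (g : Mor (Y m.+1) W), mcomp g (dY m) = 0 <->
        exists h : Mor (X m.+2) W, g = mcomp h dYn)
  (hdf : mcomp dYn (f m.+1) = dX m.+1) :
  forall (W : C) (g : Mor (Y m.+1) W), mcomp g (cone_last m dY f) = 0 -> g = 0.
Proof.
move=> W g; rewrite clE comp_row => /row2_eq0 [h1 h2].
have [u hu] := proj1 (hYR2 W g) h2.
have u0 : u = 0 by apply: hXR1; rewrite -hdf Defs.compA -hu h1.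
by rewrite hu u0 comp0m.
Qed.

Lemma row2_cd m : mcomp (dX m.+1) (dX m) = 0 ->
  mcomp (row2 (dX m.+1) (0 : Mor (Y m) (X m.+2))) (cd m) = 0.
Proof.
case: m => [|i] hx.
- by rewrite cd0E row_col compNr hx oppm0 comp0m addm0.
- by rewrite cdSE row_col comp0m addm0 comp_row compNr hx oppm0 compm0 row2_0.
Qed.

Lemma cone_R_ext m :
  right_nexact m (cone_obj X Y) cd (Y m.+1) (cone_last m dY f) ->
  forall j, (j < m)%N -> forall (W : C) (G : Mor (cone_obj X Y j.+2) W),
    mcomp G (cd j.+1) = 0 -> exists h : Mor (Y j.+2) W, mcomp G inj2 = mcomp h (dY j.+1).
Proof.
case=> _ R2 R3 j hj W G hG; case: (ltnP j.+1 m) => hjm.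
- have [H hH] := proj1 (R3 j.+1 hjm W G) hG.
  exists (mcomp H inj2); rewrite hH -Defs.compA cdSE col_comp row_inj2 comp_col.
  by rewrite row_inj2 compm0 add0m.
- have e : m = j.+1 by apply/eqP; rewrite eqn_leq hjm hj.
  move: R2; rewrite e => R2.
  have [H hH] := proj1 (R2 W G) hG.
  by exists H; rewrite hH -Defs.compA clE row_inj2.
Qed.

Lemma make_dYn m (hXR : right_nexact m X dX (X m.+2) (dX m.+1))
  (hXc : mcomp (dX m.+1) (dX m) = 0)
  (hf : forall k, (k <= m)%N -> mcomp (f k.+1) (dX k) = mcomp (dY k) (f k))
  (hYc : forall k, (k < m)%N -> mcomp (dY k.+1) (dY k) = 0)
  (hR : right_nexact m (cone_obj X Y) cd (Y m.+1) (cone_last m dY f)) :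
  exists dYn : Mor (Y m.+1) (X m.+2),
    mcomp dYn (f m.+1) = dX m.+1 /\ right_nexact m Y dY (X m.+2) dYn.
Proof.
have hext := cone_R_ext hR.
case: hR => R1 R2 R3.
have [dYn hd] := proj1 (R2 _ _) (row2_cd hXc).
rewrite clE comp_row in hd; case: (row2_eq hd) => e1 e2.
exists dYn; split; first by [].
have hXR1 : forall (W : C) (g : Mor (X m.+2) W), mcomp g (dX m.+1) = 0 -> g = 0.
  by case: hXR.
split.
- by move=> W g hg; apply: hXR1; rewrite e1 Defs.compA hg comp0m.
- move=> W g; split.
  + move=> hg.
    have hgx : mcomp (mcomp g (f m.+1)) (dX m) = 0.
      by rewrite -Defs.compA hf // Defs.compA hg comp0m.
    have [u hu] := rex_at hXR (leqnn m) hgx.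
    exists u; apply/eqP; rewrite -subr_eq0; apply/eqP; apply: R1.
    rewrite clE comp_row !compDl !compNl -!Defs.compA -e1 -e2 hu compm0 hg.
    by rewrite subrr subrr row2_0.
  + by case=> h ->; rewrite -Defs.compA -e2 compm0.
- move=> j hj W g; split.
  + move=> hg.
    have hgx : mcomp (mcomp g (f j.+1)) (dX j) = 0.
      by rewrite -Defs.compA hf ?(ltnW hj) // Defs.compA hg comp0m.
    have [a ha] := rex_at hXR (ltnW hj) hgx.
    have hG : mcomp (row2 a g) (cd j.+1) = 0.
      rewrite /= mx2E row_col !comp_row compm0 compNr row2D -ha addNm hg add0m.
      exact: row2_0.
    have [h hh] := hext j hj W (row2 a g) hG.
    by exists h; rewrite -hh row_inj2.
  + by case=> h ->; rewrite -Defs.compA hYc // compm0.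
Qed.

End Cone.

(* n = m.+1 *)
Theorem mainTheorem12 (C : AddCat) (m : nat) (hC : nAbelian C m)
  (X : nat -> C) (dX : forall k, Mor (X k) (X k.+1))
  (hX : nexact m X dX (X m.+2) (dX m.+1))
  (Y : nat -> C) (dY : forall k, Mor (Y k) (Y k.+1))
  (hYc : forall k, (k < m)%N -> mcomp (dY k.+1) (dY k) = 0)
  (hY0 : mono (dY 0%N))
  (f : forall k, Mor (X k) (Y k))
  (hf : forall k, (k <= m)%N -> mcomp (f k.+1) (dX k) = mcomp (dY k) (f k)) :
  [<-> right_nexact m (cone_obj X Y) (cone_d dX dY f) (Y m.+1) (cone_last m dY f);
       nexact m (cone_obj X Y) (cone_d dX dY f) (Y m.+1) (cone_last m dY f);
       right_nexact m (cone_obj X Y) (cone_d dX dY f) (Y m.+1) (cone_last m dY f)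
       /\ left_nexact m (cone_obj X Y) (cone_d dX dY f) (Y m.+1) (cone_last m dY f);
       exists dYn : Mor (Y m.+1) (X m.+2),
         mcomp dYn (f m.+1) = dX m.+1 /\ nexact m Y dY (X m.+2) dYn].
Proof.
case: hC => _ _ _ hmono hepi.
case: hX => hXR hXL.
have [_ hXc2] := lex_cpx hXL.
have hX0 : mono (dX 0).
  by apply: mono_of_eq0; case: hXL.
tfae.
- by move=> hR; apply: hmono => //; apply: cone_mono.
- by [].
- case=> hR _.
  have [dYn [hdf hYR]] := make_dYn hXR hXc2 hf hYc hR.
  by exists dYn; split => //; apply: hmono.
- case=> dYn [hdf [hYR hYL]].
  have hL := cone_left hXL hY0 hYL hdf hf.
  have hE : epi (cone_last m dY f).
    apply: epi_of_eq0; apply: (cl_epi (dX := dX) (dYn := dYn)) => //.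
    - by case: hXR.
    - by case: hYR.
  by case: (hepi _ _ _ _ hE hL).
Qed.
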